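(* Let $\mathcal{A}\in\{0,1\}^{N\times N}$ be the (symmetric) adjacency matrix of an undirected graph. Let $\mathcal{S}_{\mathcal{A}}=\{M\in\mathbb{C}^{N\times N}: M^T=-M,\ M_{ij}=0\text{ whenever }\mathcal{A}_{ij}=0\}$, equipped with the Frobenius inner product $\langle M_1,M_2\rangle=\operatorname{tr}(M_1^*M_2)$, and $\mathbb{C}^N$ with the standard inner product. Define $\mathcal{L}_{\mathcal{A}}:\mathcal{S}_{\mathcal{A}}\to\mathbb{C}^N$ by $\mathcal{L}_{\mathcal{A}}(M)=M\mathbb{1}$, with adjoint $\mathcal{L}_{\mathcal{A}}^\dagger$. Then $\mathcal{L}_{\mathcal{A}}\mathcal{L}_{\mathcal{A}}^\dagger=\frac12 L$, where $L=\operatorname{diag}(\mathcal{A}\mathbb{1})-\mathcal{A}$ is the Laplacian of the graph.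
   Context: $\mathbb{1}$ is the all-ones vector; $\operatorname{diag}(v)$ is the diagonal matrix with the entries of $v$ on its diagonal; $M^T$ denotes transpose (not conjugate transpose). *)

(* Defs.v *)
From HB Require Import structures.
From mathcomp Require Import all_boot all_order all_algebra.
Set Implicit Arguments. Unset Strict Implicit. Unset Printing Implicit Defensive.
Import Order.TTheory GRing.Theory Num.Theory.
Local Open Scope ring_scope.

Definition ones (C : numClosedFieldType) (N : nat) : 'cV[C]_N := const_mx 1.

Definition ctrmx (C : numClosedFieldType) (m n : nat) (M : 'M[C]_(m, n)) : 'M[C]_(n, m) :=
  (map_mx Num.conj M)^T.

Definition frob (C : numClosedFieldType) (N : nat) (M1 M2 : 'M[C]_N) : C :=
  \tr (ctrmx M1 *m M2).

Definition cdot (C : numClosedFieldType) (N : nat) (u v : 'cV[C]_N) : C :=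
  \sum_i (u i ord0)^* * v i ord0.

Definition is_adjacency (C : numClosedFieldType) (N : nat) (A : 'M[C]_N) : Prop :=
  A^T = A /\ forall i j, A i j = 0 \/ A i j = 1.

Definition in_SA (C : numClosedFieldType) (N : nat) (A M : 'M[C]_N) : Prop :=
  M^T = - M /\ forall i j, A i j = 0 -> M i j = 0.

Definition LA (C : numClosedFieldType) (N : nat) (M : 'M[C]_N) : 'cV[C]_N :=
  M *m ones C N.

Definition is_adjoint_LA (C : numClosedFieldType) (N : nat) (A : 'M[C]_N)
    (Ldag : 'cV[C]_N -> 'M[C]_N) : Prop :=
  (forall v, in_SA A (Ldag v)) /\
  (forall M v, in_SA A M -> cdot (LA M) v = frob M (Ldag v)).

Definition laplacian (C : numClosedFieldType) (N : nat) (A : 'M[C]_N) : 'M[C]_N :=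
  diag_mx (A *m ones C N)^T - A.

(* Main.v *)
Require Import Defs.
From mathcomp Require Import all_boot all_order all_algebra.
From mathcomp Require Import ring.
Import GRing.Theory Num.Theory.
Local Open Scope ring_scope.

Section S.
Variables (C : numClosedFieldType) (N : nat).

Lemma frob_sum (M1 M2 : 'M[C]_N) :
  frob M1 M2 = \sum_i \sum_j (M1 i j)^* * M2 i j.
Proof.
rewrite /frob /ctrmx /mxtrace; under eq_bigr => i _ do rewrite !mxE.
rewrite exchange_big; apply: eq_bigr => i _; apply: eq_bigr => j _.
by rewrite !mxE.
Qed.

Lemma cdot_LA (M : 'M[C]_N) v :
  cdot (LA M) v = \sum_i \sum_j (M i j)^* * v i ord0.
Proof.
rewrite /cdot /LA; apply: eq_bigr => i _; rewrite !mxE rmorph_sum mulr_suml.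
by apply: eq_bigr => j _; rewrite /ones !mxE mulr1.
Qed.

Lemma frob_self_eq0 (X : 'M[C]_N) : frob X X = 0 -> X = 0.
Proof.
rewrite frob_sum => H; apply/matrixP => i j; rewrite mxE.
have ge0 : forall i j, 0 <= (X i j)^* * X i j.
  by move=> a b; rewrite mulrC mul_conjC_ge0.
move/eqP: H; rewrite psumr_eq0; last by move=> a _; rewrite sumr_ge0.
move/allP/(_ i (mem_index_enum _)); rewrite /= psumr_eq0 //.
move/allP/(_ j (mem_index_enum _)); rewrite /= mulrC mul_conjC_eq0.
by move/eqP.
Qed.

Lemma frobB (M P Q : 'M[C]_N) : frob M (P - Q) = frob M P - frob M Q.
Proof.
rewrite !frob_sum -sumrB; apply: eq_bigr => i _.
by rewrite -sumrB; apply: eq_bigr => j _; rewrite !mxE mulrBr.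
Qed.

Variable A : 'M[C]_N.
Hypothesis HA : is_adjacency A.

Definition D (v : 'cV[C]_N) : 'M[C]_N :=
  \matrix_(i, j) (A i j * (v i ord0 - v j ord0) / 2%:R).

Lemma D_SA v : in_SA A (D v).
Proof.
case: HA => Hs _; split.
  apply/matrixP => i j; rewrite !mxE.
  have -> : A j i = A i j by rewrite -{1}Hs mxE.
  by ring.
by move=> i j H; rewrite mxE H !mul0r.
Qed.

Lemma D_adj M v : in_SA A M -> cdot (LA M) v = frob M (D v).
Proof.
case=> HT HZ; case: HA => _ H01.
rewrite cdot_LA frob_sum.
have E : forall i j, (M i j)^* * D v i j = (M i j)^* * (v i ord0 - v j ord0) / 2%:R.
  move=> i j; rewrite mxE; case: (H01 i j) => H.
    by rewrite (HZ _ _ H) H rmorph0 !mul0r.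
  by rewrite H mul1r mulrA.
set S1 := \sum_i \sum_j (M i j)^* * v i ord0.
pose S2 := \sum_i \sum_j (M i j)^* * v j ord0.
have -> : \sum_i \sum_j (M i j)^* * D v i j = (S1 - S2) / 2%:R.
  rewrite -sumrB mulr_suml; apply: eq_bigr => i _.
  rewrite -sumrB mulr_suml; apply: eq_bigr => j _; rewrite E; ring.
have -> : S2 = - S1.
  rewrite /S2 exchange_big -sumrN; apply: eq_bigr => i _.
  rewrite -sumrN; apply: eq_bigr => j _.
  have -> : M j i = - M i j by have := congr1 (fun X : 'M[C]_N => X i j) HT; rewrite !mxE.
  by rewrite rmorphN mulNr.
have h2 : (2%:R : C) != 0 by rewrite pnatr_eq0.
rewrite opprK; field; by rewrite ?pnatr_eq0.
Qed.

Lemma LA_D v : LA (D v) = (2%:R^-1 : C) *: (laplacian A *m v).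
Proof.
apply/matrixP => i k; rewrite (ord1 k) /LA /laplacian mulmxBl mul_diag_mx !mxE.
rewrite mulr_suml -sumrB mulr_sumr; apply: eq_bigr => j _.
rewrite /ones !mxE; ring.
Qed.
End S.

Arguments D_SA {C N A}.
Arguments D_adj {C N A}.
Arguments LA_D {C N A}.
Theorem lemma8 (C : numClosedFieldType) (N : nat) (A : 'M[C]_N) :
  is_adjacency A ->
  (exists Ldag, is_adjoint_LA A Ldag) /\
  (forall Ldag, is_adjoint_LA A Ldag ->
     forall v : 'cV[C]_N, LA (Ldag v) = (2%:R^-1 : C) *: (laplacian A *m v)).
Proof.
move=> HA; split.
  by exists (@D _ _ A); split; [exact: D_SA | move=> M v HM; exact: D_adj].
move=> Ldag [HS Hadj] v.
suff -> : Ldag v = @D _ _ A v by exact: LA_D.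
apply/eqP; rewrite -subr_eq0; apply/eqP; apply: frob_self_eq0.
have HX : in_SA A (Ldag v - @D _ _ A v).
  case: (HS v) => T1 Z1; case: (D_SA HA v) => T2 Z2; split.
    by rewrite linearB /= T1 T2 opprB opprK addrC.
  by move=> i j H; rewrite !mxE (Z1 _ _ H) H !mul0r subrr.
rewrite frobB -Hadj // -D_adj //.
exact: subrr.
Qed.
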